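(* If $C\subseteq\mathbb{R}$ is infinite and $C\neq\mathbb{R}$, then there is a two-point selection $f$ on $\mathbb{R}$ such that $C$ is not closed in the topology $\tau_f$.
   Context: A two-point selection on $\mathbb{R}$ is a function $f$ from the set of two-element subsets of $\mathbb{R}$ to $\mathbb{R}$ with $f(F)\in F$. Write $r<_f s$ if $f(\{r,s\})=r$ ($r\ne s$), $(\leftarrow,r)_f=\{x: x<_f r\}$, $(r,\rightarrow)_f=\{x: r<_f x\}$. The topology $\tau_f$ on $\mathbb{R}$ is generated (as a subbase) by all sets $(\leftarrow,r)_f$, $(r,\rightarrow)_f$, $r\in\mathbb{R}$. *)

(* Defs.v *)
From Stdlib Require Import Reals List.
Open Scope R_scope.

(* We represent it as a binary function f r s = f({r,s}); its values on the
   diagonal (r = s) are irrelevant and unconstrained. *)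
Definition two_point_selection (f : R -> R -> R) : Prop :=
  forall r s : R, r <> s -> f r s = f s r /\ (f r s = r \/ f r s = s).

Definition sel_lt (f : R -> R -> R) (r s : R) : Prop := r <> s /\ f r s = r.

Definition sel_left_ray (f : R -> R -> R) (r : R) : R -> Prop :=
  fun x => sel_lt f x r.
Definition sel_right_ray (f : R -> R -> R) (r : R) : R -> Prop :=
  fun x => sel_lt f r x.

Definition sel_subbasic (f : R -> R -> R) (p : bool * R) : R -> Prop :=
  if fst p then sel_left_ray f (snd p) else sel_right_ray f (snd p).

Definition sel_basic (f : R -> R -> R) (l : list (bool * R)) : R -> Prop :=
  fun x => forall p, In p l -> sel_subbasic f p x.

(* tau_f-open: the topology generated by the subbase, i.e. unions of finite
   intersections of subbasic sets. *)
Definition tau_open (f : R -> R -> R) (U : R -> Prop) : Prop :=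
  forall x, U x -> exists l : list (bool * R),
    sel_basic f l x /\ (forall y, sel_basic f l y -> U y).

Definition tau_closed (f : R -> R -> R) (C : R -> Prop) : Prop :=
  tau_open f (fun x => ~ C x).

Definition infinite_set (C : R -> Prop) : Prop :=
  ~ (exists l : list R, forall x, C x -> In x l).

(* Main.v *)
Require Import Defs.
From Stdlib Require Import Reals List.
From Stdlib Require Import Classical ClassicalEpsilon Lia Lra.
Open Scope R_scope.

Section Constr.
Variable C : R -> Prop.
Variable g : list R -> R.
Hypothesis gC : forall l, C (g l).
Hypothesis gN : forall l, ~ In (g l) l.

Fixpoint pref (n : nat) : list R :=
  match n with O => nil | S k => g (pref k) :: pref k end.
Definition sq (n : nat) : R := g (pref n).

Lemma sq_in : forall n m, (m < n)%nat -> In (sq m) (pref n).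
Proof.
  induction n; intros m H; [lia|]. simpl.
  destruct (Nat.eq_dec m n) as [->|]; [left; reflexivity|right; apply IHn; lia].
Qed.

Lemma sq_inj : forall n m, sq n = sq m -> n = m.
Proof.
  intros n m E. destruct (Nat.lt_total n m) as [H|[H|H]]; auto.
  - exfalso. apply (gN (pref m)). fold (sq m). rewrite <- E. now apply sq_in.
  - exfalso. apply (gN (pref n)). fold (sq n). rewrite E. now apply sq_in.
Qed.

Variable p : R.
Hypothesis pC : ~ C p.

Lemma sq_p : forall n, sq n <> p.
Proof. intros n E. apply pC. rewrite <- E. apply gC. Qed.

Definition inr' x := exists n, x = sq n.

Definition Pl (x y : R) : Prop :=
  (x <> p /\ y = p) \/ (x <> p /\ y <> p /\ ~ inr' x /\ inr' y) \/
  (exists n m, x = sq n /\ y = sq m /\ (n < m)%nat) \/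
  (x <> p /\ y <> p /\ ~ inr' x /\ ~ inr' y /\ x < y).

Definition fsel (x y : R) : R :=
  if excluded_middle_informative (Pl x y) then x else y.

Lemma Pl_asym : forall x y, Pl x y -> Pl y x -> False.
Proof.
  intros x y H1 H2.
  destruct H1 as [[A B]|[[A [B [D E]]]|[[n [m [A [B D]]]]|[A [B [D [E F]]]]]]];
  destruct H2 as [[A' B']|[[A' [B' [D' E']]]|[[n' [m' [A' [B' D']]]]|[A' [B' [D' [E' F']]]]]]];
  subst; try congruence; try lra;
  try (apply (sq_p _ B'); fail); try (apply (sq_p _ B); fail);
  try (apply (sq_p _ A'); fail); try (apply (sq_p _ A); fail);
  try (apply D; eexists; eauto; fail); try (apply D'; eexists; eauto; fail);
  try (apply E; eexists; eauto; fail); try (apply E'; eexists; eauto; fail).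
  all: try (apply pC; apply gC). all: match goal with H: sq _ = sq _ |- _ => apply sq_inj in H end; match goal with H: sq _ = sq _ |- _ => apply sq_inj in H end; lia.
Qed.


Lemma Pl_tot : forall x y, x <> y -> Pl x y \/ Pl y x.
Proof.
  intros x y Hxy. unfold Pl.
  destruct (classic (x = p)) as [Hx|Hx]; [subst; right; left; auto|].
  destruct (classic (y = p)) as [Hy|Hy]; [subst; left; left; auto|].
  destruct (classic (inr' x)) as [[n Hn]|Ix]; destruct (classic (inr' y)) as [[m Hm]|Iy].
  - subst. destruct (Nat.lt_total n m) as [H|[H|H]].
    + left; right; right; left; eauto.
    + subst; congruence.
    + right; right; right; left; eauto.
  - right; right; left. repeat split; auto. eexists; eauto.
  - left; right; left. repeat split; auto. eexists; eauto.
  - destruct (Rtotal_order x y) as [H|[H|H]]; [|congruence|].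
    + left; right; right; right; tauto.
    + right; right; right; right; tauto.
Qed.

Lemma fsel_tps : two_point_selection fsel.
Proof.
  intros r s Hrs. unfold fsel.
  destruct (excluded_middle_informative (Pl r s)) as [H1|H1];
  destruct (excluded_middle_informative (Pl s r)) as [H2|H2].
  - exfalso; eapply Pl_asym; eauto.
  - auto.
  - auto.
  - exfalso. destruct (Pl_tot r s Hrs); tauto.
Qed.

Lemma sel_lt_Pl : forall x y, sel_lt fsel x y -> Pl x y.
Proof.
  intros x y [H E]. unfold fsel in E.
  destruct (excluded_middle_informative (Pl x y)); auto. congruence.
Qed.

Lemma Pl_sel_lt : forall x y, x <> y -> Pl x y -> sel_lt fsel x y.
Proof.
  intros x y H P. split; auto. unfold fsel.
  destruct (excluded_middle_informative (Pl x y)); tauto.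
Qed.

Lemma bound : forall l : list (bool * R), exists N,
  forall q, In q l -> forall m, snd q = sq m -> (m < N)%nat.
Proof.
  induction l as [|a l IH].
  - exists O. intros q [].
  - destruct IH as [N HN].
    destruct (classic (exists m, snd a = sq m)) as [[m0 Hm0]|Hn].
    + exists (Nat.max N (S m0)). intros q [<-|Hq] m Hm.
      * rewrite Hm0 in Hm. apply sq_inj in Hm. lia.
      * specialize (HN q Hq m Hm). lia.
    + exists N. intros q [<-|Hq] m Hm.
      * exfalso; eauto.
      * eauto.
Qed.

Lemma main : ~ tau_closed fsel C.
Proof.
  intros Hc. destruct (Hc p pC) as [l [Hp Hl]].
  destruct (bound l) as [N HN].
  apply (Hl (sq N)); [|apply gC].
  intros q Hq. specialize (Hp q Hq). specialize (HN q Hq).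
  destruct q as [b r]. unfold sel_subbasic in *. simpl in *.
  destruct b; unfold sel_left_ray, sel_right_ray in *.
  - exfalso. apply sel_lt_Pl in Hp.
    destruct Hp as [[A _]|[[A _]|[[n [m [A _]]]|[A _]]]]; try congruence.
    apply (sq_p n); auto.
  - assert (Hr : r <> p) by (destruct Hp; auto).
    assert (Hne : r <> sq N).
    { intro E. specialize (HN N E). lia. }
    apply Pl_sel_lt; auto.
    destruct (classic (inr' r)) as [[m Hm]|Hn].
    + right; right; left. exists m, N. repeat split; auto.
    + right; left. repeat split; auto. apply sq_p. exists N; auto.
Qed.
End Constr.

Theorem theorem3p14 (C : R -> Prop) :
  infinite_set C -> (exists x : R, ~ C x) ->
  exists f : R -> R -> R, two_point_selection f /\ ~ tau_closed f C.
Proof.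
  intros HI [p Hp].
  assert (Hx : forall l : list R, exists x, C x /\ ~ In x l).
  { intros l. apply NNPP. intro H. apply HI. exists l. intros x Cx.
    apply NNPP. intro N. apply H. eauto. }
  assert (G : forall l : list R, {x | C x /\ ~ In x l}).
  { intro l. apply constructive_indefinite_description. apply Hx. }
  set (g := fun l => proj1_sig (G l)).
  assert (gC : forall l, C (g l)) by (intro l; exact (proj1 (proj2_sig (G l)))).
  assert (gN : forall l, ~ In (g l) l) by (intro l; exact (proj2 (proj2_sig (G l)))).
  exists (fsel g p). split.
  - apply (fsel_tps C g gC); auto.
  - apply (main C g gC); auto.
Qed.
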